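(* Let $n$ be a positive integer divisible by $4$. Let $\mathcal{T}^*_n$ be the family of triangles on an $n$-element vertex set obtained as follows: choose $\frac{n}{4}$ pairwise disjoint pairs $\{u_i,w_i\}$ of vertices, let $R$ be the set of the remaining $\frac{n}{2}$ vertices, and let $\mathcal{T}^*_n=\{\{u_i,w_i,r\} : 1\le i\le \frac n4,\ r\in R\}$. Then $\mathcal{T}^*_n$ is a set of $\frac{n^2}{8}$ triangles with no rainbow triangle, and it is the unique such set up to isomorphism: every set of exactly $\frac{n^2}{8}$ distinct triangles on an $n$-element vertex set having no rainbow triangle is isomorphic to $\mathcal{T}^*_n$ (i.e., is the image of $\mathcal{T}^*_n$ under a bijection of the vertex sets).
   Context: A triangle on a vertex set $V$ is a $3$-element subset $\{x,y,z\}\subseteq V$, identified with its edge set $\{\{x,y\},\{y,z\},\{x,z\}\}$. For a family $\mathcal{T}$ of triangles, a rainbow triangle is a triangle $\{x,y,z\}$ on $V$ together with three distinct members $t_1,t_2,t_3$ of $\mathcal{T}$ such that $\{x,y\}$ is an edge of $t_1$, $\{y,z\}$ is an edge of $t_2$ and $\{x,z\}$ is an edge of $t_3$. *)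

(* Defs.v *)
From mathcomp Require Import all_boot.
Set Implicit Arguments. Unset Strict Implicit. Unset Printing Implicit Defensive.

Definition triangle_family (V : finType) (F : {set {set V}}) : Prop :=
  forall t, t \in F -> #|t| = 3.

Definition has_rainbow (V : finType) (F : {set {set V}}) : Prop :=
  exists x y z : V, [/\ x != y, y != z & x != z] /\
  exists t1 t2 t3 : {set V},
    [/\ t1 \in F, t2 \in F & t3 \in F] /\
    [/\ t1 != t2, t2 != t3 & t1 != t3] /\
    [/\ [set x; y] \subset t1, [set y; z] \subset t2 & [set x; z] \subset t3].

(* The extremal family T*_n on the vertex set 'I_n, with the concrete choice
   u_i = 2i, w_i = 2i+1 (0 <= i < n/4) and R = {v | n/2 <= v < n}. *)
Definition Tstar (n : nat) : {set {set 'I_n}} :=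
  [set t : {set 'I_n} | [exists i : 'I_n, exists r : 'I_n,
     [&& 4 * i < n, n <= 2 * r &
         t == [set v : 'I_n | [|| nat_of_ord v == 2 * i,
                                 nat_of_ord v == 2 * i + 1 |
                                 nat_of_ord v == nat_of_ord r]]]]].

(* Main.v *)
Require Import Defs.
From mathcomp Require Import all_boot zify.
Set Implicit Arguments. Unset Strict Implicit. Unset Printing Implicit Defensive.

Definition mstruct (V : finType) (M : {set {set V}}) (R : {set V}) : {set {set V}} :=
  [set p.2 |: p.1 | p in setX M R].

Section MStruct.
Variables (V : finType) (M : {set {set V}}) (R : {set V}).
Hypothesis HM2 : forall e, e \in M -> #|e| = 2.
Hypothesis HMR : forall e x, e \in M -> x \in e -> x \notin R.
Hypothesis HMd : forall e e' x, e \in M -> e' \in M -> x \in e -> x \in e' -> e = e'.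

Lemma mstructP t : reflect (exists e r, [/\ e \in M, r \in R & t = r |: e]) (t \in mstruct M R).
Proof.
apply: (iffP imsetP) => [[[e r]]|[e [r [eM rR ->]]]].
  by rewrite inE => /andP[/= eM rR] ->; exists e, r.
by exists (e, r) => //; rewrite inE eM rR.
Qed.

Lemma mstruct_tri : triangle_family (mstruct M R).
Proof.
move=> t /mstructP[e [r [eM rR ->]]].
rewrite cardsU1 HM2 //.
case: (boolP (r \in e)) => // re.
by move: (HMR eM re); rewrite rR.
Qed.

Lemma mstruct_card : #|mstruct M R| = #|M| * #|R|.
Proof.
rewrite /mstruct card_in_imset ?cardsX //.
move=> [e r] [e' r']; rewrite !inE /= => /andP[eM rR] /andP[e'M r'R] E.
have re : r \notin e by apply/negP => h; move: (HMR eM h); rewrite rR.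
have re' : r' \notin e' by apply/negP => h; move: (HMR e'M h); rewrite r'R.
have rr : r = r'.
  have : r \in r' |: e' by rewrite -E setU11.
  rewrite in_setU1 => /orP[/eqP //|re2]; by move: (HMR e'M re2); rewrite rR.
subst r'. by rewrite -(setU1K re) E setU1K.
Qed.

Lemma mstruct_in t u : t \in mstruct M R -> u \in t -> u \in R ->
  exists e, e \in M /\ t = u |: e.
Proof.
move=> /mstructP[e [r [eM rR ->]]]; rewrite in_setU1 => /orP[/eqP->|ue] uR.
  by exists e.
by move: (HMR eM ue); rewrite uR.
Qed.

Lemma mstruct_notR t u : t \in mstruct M R -> u \in t -> u \notin R ->
  exists e r, [/\ e \in M, r \in R, u \in e & t = r |: e].
Proof.
move=> /mstructP[e [r [eM rR ->]]]; rewrite in_setU1 => /orP[/eqP->|ue] uR.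
  by rewrite rR in uR.
by exists e, r.
Qed.

Lemma mstruct_R t u v : t \in mstruct M R -> u \in t -> u \in R -> v \in t -> v != u ->
  v \notin R /\ exists e, [/\ e \in M, v \in e & t = u |: e].
Proof.
move=> tF ut uR vt vu; have [e [eM E]] := mstruct_in tF ut uR.
move: vt; rewrite E in_setU1 (negbTE vu) /= => ve.
by split; [exact: HMR eM ve | exists e].
Qed.

Lemma mstruct_notR2 t u v : t \in mstruct M R -> u \in t -> v \in t -> u \notin R -> v \notin R ->
  exists e, [/\ e \in M, u \in e & v \in e].
Proof.
move=> /mstructP[e [r [eM rR ->]]]; rewrite !in_setU1 => /orP[/eqP->|ue]; first by rewrite rR.
move=> /orP[/eqP->|ve]; first by rewrite rR.
by move=> _ _; exists e.
Qed.

Lemma mstruct_center u v w s1 s2 s3 :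
  s1 \in mstruct M R -> s2 \in mstruct M R -> s3 \in mstruct M R ->
  u \in R -> v != u -> w != u -> u \in s1 -> v \in s1 -> u \in s2 -> w \in s2 ->
  v \in s3 -> w \in s3 -> s1 = s2.
Proof.
move=> s1F s2F s3F uR vu wu us1 vs1 us2 ws2 vs3 ws3.
have [vR [e1 [e1M ve1 E1]]] := mstruct_R s1F us1 uR vs1 vu.
have [wR [e2 [e2M we2 E2]]] := mstruct_R s2F us2 uR ws2 wu.
have [e3 [e3M ve3 we3]] := mstruct_notR2 s3F vs3 ws3 vR wR.
by rewrite E1 E2 (HMd e1M e3M ve1 ve3) (HMd e2M e3M we2 we3).
Qed.

Lemma card3 (x y z : V) : x != y -> y != z -> x != z -> #|[set x; y; z]| = 3.
Proof.
move=> xy yz xz; rewrite -setUA cardsU1 cards2 !inE.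
by rewrite (negbTE xy) (negbTE xz) yz.
Qed.

Lemma mstruct_norb : ~ has_rainbow (mstruct M R).
Proof.
move=> [x [y [z [[xy yz xz] [t1 [t2 [t3 [[t1F t2F t3F] [[d12 d23 d13] [s1 s2 s3]]]]]]]]]].
move: s1 s2 s3; rewrite !subUset !sub1set => /andP[xt1 yt1] /andP[yt2 zt2] /andP[xt3 zt3].
case: (boolP (x \in R)) => xR.
  move/eqP: d13; apply; apply: (mstruct_center t1F t3F t2F xR _ _ xt1 yt1 xt3 zt3 yt2 zt2).
    by rewrite eq_sym. by rewrite eq_sym.
case: (boolP (y \in R)) => yR.
  move/eqP: d12; apply; apply: (mstruct_center t1F t2F t3F yR _ _ yt1 xt1 yt2 zt2 xt3 zt3).
    by []. by rewrite eq_sym.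
case: (boolP (z \in R)) => zR.
  move/eqP: d23; apply; apply: (mstruct_center t2F t3F t1F zR _ _ zt2 yt2 zt3 xt3 yt1 xt1).
    by []. by [].
have [e1 [e1M xe1 ye1]] := mstruct_notR2 t1F xt1 yt1 xR yR.
have [e2 [e2M ye2 ze2]] := mstruct_notR2 t2F yt2 zt2 yR zR.
have E := HMd e1M e2M ye1 ye2; subst e2.
have : #|[set x; y; z]| <= #|e1|.
  by apply: subset_leq_card; rewrite !subUset !sub1set xe1 ye1 ze2.
by rewrite card3 // HM2.
Qed.
End MStruct.
Section TS.
Variables (n k : nat).
Hypothesis hn : n = 4 * k.

Definition pairT (i : nat) : {set 'I_n} :=
  [set v : 'I_n | (nat_of_ord v == 2 * i) || (nat_of_ord v == 2 * i + 1)].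
Definition M0 : {set {set 'I_n}} := [set pairT i | i : 'I_n & 4 * i < n].
Definition R0 : {set 'I_n} := [set v : 'I_n | n <= 2 * v].

Lemma Tstar_mstruct : Tstar n = mstruct M0 R0.
Proof.
apply/setP => t; rewrite inE; apply/existsP/mstructP.
  move=> [i /existsP[r /and3P[hi hr /eqP ->]]].
  exists (pairT i), r; split.
  - by apply/imsetP; exists i => //; rewrite inE.
  - by rewrite inE.
  - by apply/setP => v; rewrite !inE [RHS]orbC -orbA.
move=> [e [r [/imsetP[i]]]]; rewrite inE => hi -> rR ->.
exists i; apply/existsP; exists r.
rewrite hi; move: rR; rewrite inE => -> /=.
by apply/eqP/setP => v; rewrite !inE orbC -orbA.
Qed.

Lemma M0_2 e : e \in M0 -> #|e| = 2.
Proof.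
move=> /imsetP[i]; rewrite inE => hi ->.
have h1 : 2 * i < n by lia.
have h2 : 2 * i + 1 < n by lia.
have -> : pairT i = [set Ordinal h1; Ordinal h2].
  by apply/setP => v; rewrite !inE -!val_eqE.
by rewrite cards2 -val_eqE /=; case: eqP => //; lia.
Qed.

Lemma M0_R e x : e \in M0 -> x \in e -> x \notin R0.
Proof.
move=> /imsetP[i]; rewrite inE => hi ->; rewrite !inE -ltnNge.
by case/orP => /eqP ->; lia.
Qed.

Lemma M0_d e e' x : e \in M0 -> e' \in M0 -> x \in e -> x \in e' -> e = e'.
Proof.
move=> /imsetP[i _ ->] /imsetP[j _ ->]; rewrite !inE => hi hj.
have -> : nat_of_ord i = j.
  by case/orP: hi => /eqP hi; case/orP: hj => /eqP hj; lia.
by [].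
Qed.

Lemma card_lt m : m <= n -> #|[set v : 'I_n | v < m]| = m.
Proof.
move=> hm.
have -> : [set v : 'I_n | v < m] = [set widen_ord hm j | j : 'I_m].
  apply/setP => v; rewrite inE; apply/idP/imsetP.
    by move=> vm; exists (Ordinal vm) => //; apply/val_inj.
  by move=> [j _ ->] /=.
by rewrite card_imset ?card_ord //; move=> a b /(congr1 val) /= /val_inj.
Qed.

Lemma card_R0 : #|R0| = 2 * k.
Proof.
have -> : R0 = ~: [set v : 'I_n | v < 2 * k].
  by apply/setP => v; rewrite !inE -leqNgt; apply/idP/idP => ?; lia.
by rewrite cardsCs setCK card_lt ?card_ord //; lia.
Qed.

Lemma card_M0 : #|M0| = k.
Proof.
rewrite card_in_imset.
  have -> : [set i : 'I_n | 4 * i < n] = [set v : 'I_n | v < k].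
    by apply/setP => v; rewrite !inE; apply/idP/idP => ?; lia.
  by rewrite card_lt //; lia.
move=> i j; rewrite !inE => hi hj E.
have h1 : 2 * i < n by lia.
have : Ordinal h1 \in pairT j by rewrite -E inE eqxx.
rewrite inE /= => /orP[]/eqP h; apply/val_inj => /=; lia.
Qed.
End TS.
Lemma mstruct_transport (T V : finType) (f : T -> V) (M : {set {set T}}) (R : {set T}) :
  [set f @: t | t : {set T} in mstruct M R] = mstruct [set f @: e | e : {set T} in M] (f @: R).
Proof.
apply/setP => t; apply/imsetP/mstructP.
  move=> [t0 /mstructP[e [r [eM rR ->]]] ->].
  exists (f @: e), (f r); split; [exact: imset_f | exact: imset_f | exact: imsetU1].
move=> [e' [r' [/imsetP[e eM ->] /imsetP[r rR ->] ->]]].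
exists (r |: e); last by rewrite imsetU1.
by apply/mstructP; exists e, r.
Qed.

Lemma enum2 (V : finType) (e : {set V}) : #|e| = 2 -> exists a b, a != b /\ enum e = [:: a; b].
Proof.
rewrite cardE; have := enum_uniq (mem e).
case: (enum e) => [|a [|b [|c s]]] //= /andP[]; rewrite inE => ab _ _.
by exists a, b.
Qed.

Section Bij.
Variables (V : finType) (M : {set {set V}}) (R : {set V}) (n k : nat) (x0 : V).
Hypothesis hn : n = 4 * k.
Hypothesis HM2 : forall e, e \in M -> #|e| = 2.
Hypothesis HMR : forall e x, e \in M -> x \in e -> x \notin R.
Hypothesis HMd : forall e e' x, e \in M -> e' \in M -> x \in e -> x \in e' -> e = e'.
Hypothesis cM : #|M| = k.
Hypothesis cR : #|R| = 2 * k.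
Hypothesis cV : #|V| = n.

Let eM := enum M.
Let eR := enum R.
Definition gB (i : nat) : V :=
  if i < 2 * k then nth x0 (enum (nth set0 eM i./2)) (odd i) else nth x0 eR (i - 2 * k).
Definition fB (i : 'I_n) : V := gB i.

Lemma size_eM : size eM = k. Proof. by rewrite /eM -cardE. Qed.
Lemma size_eR : size eR = 2 * k. Proof. by rewrite /eR -cardE. Qed.

Lemma nth_eM i : i < k -> nth set0 eM i \in M.
Proof. by move=> ik; rewrite -[_ \in M]mem_enum mem_nth // size_eM. Qed.

Lemma gB_low i : i < 2 * k -> gB i \in nth set0 eM i./2.
Proof.
move=> ik; rewrite /gB ik.
have eM' : nth set0 eM i./2 \in M by apply: nth_eM; rewrite -ltn_double -!mul2n; 
  have := odd_double_half i; lia.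
by rewrite -mem_enum mem_nth // -cardE HM2 //; case: (odd i).
Qed.

Lemma gB_high i : 2 * k <= i -> i < n -> gB i \in R.
Proof.
move=> h1 h2; rewrite /gB ltnNge h1 /=.
by rewrite -mem_enum mem_nth // size_eR; lia.
Qed.

Lemma fB_inj : injective fB.
Proof.
move=> [i hi] [j hj]; rewrite /fB /= => E; apply/val_inj => /=.
have hi2 := odd_double_half i; have hj2 := odd_double_half j.
case: (ltnP i (2 * k)) => li; case: (ltnP j (2 * k)) => lj.
- have ei := gB_low li; have ej := gB_low lj.
  have ik : i./2 < k by lia.
  have jk : j./2 < k by lia.
  rewrite E in ei.
  have := HMd (nth_eM ik) (nth_eM jk) ei ej.
  move/eqP; rewrite nth_uniq ?size_eM ?enum_uniq // => /eqP hij.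
  move: E; rewrite /gB li lj hij.
  have h2 := HM2 (nth_eM jk).
  move/eqP; rewrite nth_uniq ?enum_uniq // -?cardE ?h2; last 2 first.
  + by case: (odd i). + by case: (odd j).
  move/eqP => hodd; lia.
- have ik : i./2 < k by lia.
  by have := HMR (nth_eM ik) (gB_low li); rewrite E gB_high.
- have jk : j./2 < k by lia.
  by have := HMR (nth_eM jk) (gB_low lj); rewrite -E gB_high.
- move: E; rewrite /gB ltnNge li ltnNge lj /=.
  move/eqP; rewrite nth_uniq ?enum_uniq // ?size_eR; [move/eqP; lia | lia | lia].
Qed.

Lemma fB_bij : bijective fB.
Proof. by apply: inj_card_bij; [exact: fB_inj | rewrite card_ord cV]. Qed.

Lemma fB_R0 : fB @: R0 n = R.
Proof.
apply/setP => x; apply/imsetP/idP.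
  by move=> [v]; rewrite inE => hv ->; apply: gB_high => //; lia.
move=> xR.
have hj : index x eR < 2 * k by rewrite -size_eR index_mem /eR mem_enum.
have hv : 2 * k + index x eR < n by lia.
exists (Ordinal hv); first by rewrite inE /=; lia.
by rewrite /fB /gB /= ltnNge leq_addr /= addKn nth_index // /eR mem_enum.
Qed.

Lemma fB_pair i : i < k -> fB @: pairT n i = nth set0 eM i.
Proof.
move=> ik; have eM' := nth_eM ik.
have [a [b [ab Ee]]] := enum2 (HM2 eM').
have h1 : 2 * i < n by lia.
have h2 : 2 * i + 1 < n by lia.
have o1 : odd (2 * i) = false by rewrite oddM.
have o2 : odd (2 * i + 1) = true by rewrite oddD oddM.
have d1 : (2 * i)./2 = i by have := odd_double_half (2 * i); rewrite o1; lia.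
have d2 : (2 * i + 1)./2 = i by have := odd_double_half (2 * i + 1); rewrite o2; lia.
have g1 : gB (2 * i) = a by rewrite /gB ifT ?o1 ?d1 ?Ee //; lia.
have g2 : gB (2 * i + 1) = b by rewrite /gB ifT ?o2 ?d2 ?Ee //; lia.
apply/setP => y; apply/imsetP/idP.
  move=> [v]; rewrite inE => /orP[]/eqP hv ->; rewrite /fB hv ?g1 ?g2 -mem_enum Ee !inE eqxx ?orbT //.
rewrite -mem_enum Ee !inE => /orP[]/eqP ->.
  by exists (Ordinal h1); rewrite ?inE ?eqxx // /fB /= g1.
by exists (Ordinal h2); rewrite ?inE ?eqxx ?orbT // /fB /= g2.
Qed.

Lemma fB_M0 : [set fB @: e | e : {set 'I_n} in M0 n] = M.
Proof.
apply/setP => e; apply/imsetP/idP.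
  move=> [e0 /imsetP[i]]; rewrite inE => hi -> ->.
  by rewrite fB_pair; [apply: nth_eM | ]; lia.
move=> eM0.
have hj : index e eM < k by rewrite -size_eM index_mem /eM mem_enum.
have hj' : index e eM < n by lia.
exists (pairT n (Ordinal hj')).
  by apply/imsetP; exists (Ordinal hj') => //; rewrite inE /=; lia.
by rewrite fB_pair // nth_index // /eM mem_enum.
Qed.
End Bij.

Lemma tri_eq (V : finType) (t : {set V}) a b c : #|t| = 3 -> a \in t -> b \in t -> c \in t ->
  a != b -> b != c -> a != c -> t = [set a; b; c].
Proof.
move=> ct at_ bt ct_ ab bc ac; apply/esym/eqP; rewrite eqEcard card3 // ct leqnn andbT.
by rewrite !subUset !sub1set at_ bt ct_.
Qed.

Lemma tri_rep (V : finType) (t : {set V}) z : #|t| = 3 -> z \in t ->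
  exists a c, [/\ z != a, a != c, z != c & t = [set z; a; c]].
Proof.
move=> ct zt.
have : #|t :\ z| == 2 by move: ct; rewrite (cardsD1 z t) zt add1n => -[->].
move/cards2P => [a [c [ac E]]].
have : a \in t :\ z by rewrite E !inE eqxx.
have : c \in t :\ z by rewrite E !inE eqxx orbT.
rewrite !inE => /andP[cz ct'] /andP[az at'].
have za : z != a by rewrite eq_sym.
have zc : z != c by rewrite eq_sym.
exists a, c; split => //.
exact: tri_eq.
Qed.

Lemma sum_pairs (V : finType) (Q : V -> V -> bool) :
  \sum_x \sum_y (Q x y : nat) = #|[set p : V * V | Q p.1 p.2]|.
Proof.
rewrite pair_big /= -sum1dep_card [RHS]big_mkcond /=.
by apply: eq_bigr => p _; case: (Q p.1 p.2).
Qed.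

Lemma setQ (V : finType) (z a c : V) : z != a -> a != c -> z != c ->
  [set p : V * V | [&& p.1 != p.2, p.1 \in [set z; a; c], p.2 \in [set z; a; c]
     & (z == p.1) || (z == p.2)]] = [set (z, a); (a, z); (z, c); (c, z)].
Proof.
move=> za ac zc.
have az : a != z by rewrite eq_sym.
have cz : c != z by rewrite eq_sym.
have ca : c != a by rewrite eq_sym.
apply/setP => -[x y]; rewrite !inE /= !xpair_eqE (eq_sym z x) (eq_sym z y).
case: (eqVneq x z) => [->|hxz].
all: try (case: (eqVneq x a) => [->|hxa]).
all: try (case: (eqVneq x c) => [->|hxc]).
all: try (case: (eqVneq y z) => [->|hyz]).
all: try (case: (eqVneq y a) => [->|hya]).
all: try (case: (eqVneq y c) => [->|hyc]).
all: rewrite ?eqxx ?(negbTE za) ?(negbTE zc) ?(negbTE ac) ?(negbTE az) ?(negbTE cz) ?(negbTE ca) /=.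
all: rewrite ?andbF ?orbF ?andbT //=.
Qed.


Lemma sumQ_gen (V : finType) (t : {set V}) z a c : z != a -> a != c -> z != c -> t = [set z; a; c] ->
  \sum_x \sum_y ([&& x != y, x \in t, y \in t & (z == x) || (z == y)] : nat) = 4.
Proof.
move=> za ac zc ->; rewrite sum_pairs setQ //.
rewrite -!setUA !cardsU1 cards1 !inE !xpair_eqE.
have az : a != z by rewrite eq_sym.
have cz : c != z by rewrite eq_sym.
have ca : c != a by rewrite eq_sym.
by rewrite ?eqxx ?(negbTE za) ?(negbTE zc) ?(negbTE ac) ?(negbTE az) ?(negbTE cz) ?(negbTE ca).
Qed.

Lemma mem3 (V : finType) (x a b c : V) : x \in [set a; b; c] -> [\/ x = a, x = b | x = c].
Proof. by rewrite !inE => /orP[/orP[]|]/eqP->; [constructor 1|constructor 2|constructor 3]. Qed.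

Lemma sum_bool (I : finType) (b : pred I) : \sum_i (b i : nat) = #|[set i | b i]|.
Proof.
rewrite -sum1dep_card [RHS]big_mkcond /=.
by apply: eq_bigr => p _; case: (b p).
Qed.

Lemma splitA (I : finType) (f : I -> nat) (A : {set I}) :
  \sum_x f x = \sum_(x in A) f x + \sum_(x in ~: A) f x.
Proof.
rewrite (bigID (mem A)) /=; congr (_ + _); apply: eq_bigl => x; by rewrite !inE.
Qed.

Lemma sum_eq_max (I : finType) (A : {set I}) (f : I -> nat) c :
  (forall i, i \in A -> f i <= c) -> \sum_(i in A) f i = #|A| * c -> forall i, i \in A -> f i = c.
Proof.
move=> le E.
have : \sum_(i in A) (c - f i) == 0.
  have : \sum_(i in A) ((c - f i) + f i) = #|A| * c.
    by rewrite -sum_nat_const; apply: eq_bigr => i iA; rewrite subnK // le.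
  by rewrite big_split /= E => /eqP; rewrite -{2}[#|A| * c]add0n eqn_add2r.
rewrite sum_nat_eq0 => /forall_inP H i iA; have := H i iA; have := le i iA; lia.
Qed.

Section Uniq.
Variables (V : finType) (F : {set {set V}}) (x0 : V).
Hypothesis triF : triangle_family F.
Hypothesis norb : ~ has_rainbow F.

Definition privb (t : {set V}) x y := [forall t' in F, (x \in t') && (y \in t') ==> (t' == t)].

Lemma privP t x y t' : privb t x y -> t' \in F -> x \in t' -> y \in t' -> t' = t.
Proof. by move=> /forall_inP H t'F xt yt; apply/eqP; apply: (implyP (H t' t'F)); rewrite xt yt. Qed.

Lemma privC t x y : privb t x y = privb t y x.
Proof. by apply: eq_forallb_in => t' _; rewrite andbC. Qed.

Lemma nprivP t x y : ~~ privb t x y -> exists t', [/\ t' \in F, x \in t', y \in t' & t' != t].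
Proof.
move/forall_inPn => [t' t'F]; rewrite negb_imply => /andP[/andP[xt yt] ne].
by exists t'.
Qed.

Lemma rainbow_of x y z t1 t2 t3 : x != y -> y != z -> x != z ->
  t1 \in F -> t2 \in F -> t3 \in F -> t1 != t2 -> t2 != t3 -> t1 != t3 ->
  x \in t1 -> y \in t1 -> y \in t2 -> z \in t2 -> x \in t3 -> z \in t3 -> False.
Proof.
move=> xy yz xz t1F t2F t3F d12 d23 d13 x1 y1 y2 z2 x3 z3; apply: norb.
exists x, y, z; split => //; exists t1, t2, t3; split => //; split => //.
by split; rewrite subUset !sub1set ?x1 ?y1 ?y2 ?z2 ?x3 ?z3.
Qed.

Lemma L1 t a b c : t \in F -> a \in t -> b \in t -> c \in t -> a != b -> b != c -> a != c ->
  ~~ privb t a b -> ~~ privb t a c -> False.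
Proof.
move=> tF at_ bt ct ab bc ac /nprivP[t1 [t1F a1 b1 n1]] /nprivP[t2 [t2F a2 c2 n2]].
have ba : b != a by rewrite eq_sym.
apply: (@rainbow_of b a c t1 t2 t) => //.
apply/eqP => E; subst t2.
have E1 := tri_eq (triF t1F) a1 b1 c2 ab bc ac.
have E2 := tri_eq (triF tF) at_ bt ct ab bc ac.
by rewrite E1 E2 eqxx in n1.
Qed.

Definition Pap (t : {set V}) (z : V) := [forall x in t, (x != z) ==> privb t z x].

Lemma apex_ex t : t \in F -> exists2 z, z \in t & Pap t z.
Proof.
move=> tF; have ct := triF tF.
have [a at_] : exists a, a \in t by apply/set0Pn; rewrite -card_gt0 ct.
have [b [c [ab bc ac Et]]] := tri_rep ct at_.
have bt : b \in t by rewrite Et !inE eqxx orbT.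
have ct_ : c \in t by rewrite Et !inE eqxx !orbT.
have ba : b != a by rewrite eq_sym.
have cb : c != b by rewrite eq_sym.
have ca : c != a by rewrite eq_sym.
case: (boolP (privb t b c)) => pbc; last first.
  exists a => //; apply/forall_inP => x; rewrite {1}Et => /mem3[]->; rewrite ?eqxx //=; apply/implyP => _.
  - apply/negPn/negP => h; apply: (L1 tF bt at_ ct_ ba ac bc) => //; by rewrite privC.
  - apply/negPn/negP => h; apply: (L1 tF ct_ at_ bt ca ab cb); rewrite privC //.
case: (boolP (privb t a b)) => pab.
  exists b => //; apply/forall_inP => x; rewrite {1}Et => /mem3[]->; rewrite ?eqxx //=; apply/implyP => _ //.
  by rewrite privC.
exists c => //; apply/forall_inP => x; rewrite {1}Et => /mem3[]->; rewrite ?eqxx //=; apply/implyP => _ //.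
  apply/negPn/negP => h; apply: (L1 tF at_ bt ct_ ab bc ac) => //.
  by rewrite privC.
by rewrite privC.
Qed.

Definition apex (t : {set V}) := odflt x0 [pick z in t | Pap t z].

Lemma apexP t : t \in F -> apex t \in t /\ Pap t (apex t).
Proof.
move=> tF; rewrite /apex; case: pickP => [z /andP[zt Pz] | H] //=.
have [z zt Pz] := apex_ex tF.
by move: (H z); rewrite zt Pz.
Qed.

Definition Q (t : {set V}) (x y : V) := [&& x != y, x \in t, y \in t & (apex t == x) || (apex t == y)].
Definition adj (x y : V) := [exists t in F, Q t x y].

Lemma Q_priv t x y : t \in F -> Q t x y -> privb t x y.
Proof.
move=> tF /and4P[xy xt yt]; have [_ /forall_inP Pz] := apexP tF.
case/orP => /eqP E.
  by rewrite -E; apply: (implyP (Pz y yt)); rewrite E eq_sym.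
by rewrite privC -E; apply: (implyP (Pz x xt)); rewrite E.
Qed.

Lemma adj_sum x y : (adj x y : nat) = \sum_(t in F) (Q t x y : nat).
Proof.
rewrite /adj; case: (boolP [exists t in F, Q t x y]).
  move=> /exists_inP[t0 t0F Q0] /=.
  rewrite (bigD1 t0) //= Q0 big1 // => t /andP[tF nt]; apply/eqP; rewrite eqb0.
  apply/negP => Qt; have := Q_priv t0F Q0.
  case/and4P: Qt => _ xt yt _ /privP/(_ tF xt yt) E.
  by rewrite E eqxx in nt.
move/exists_inPn => H /=; rewrite big1 // => t tF; by rewrite (negbTE (H t tF)).
Qed.

Lemma D_eq : \sum_x \sum_y (adj x y : nat) = 4 * #|F|.
Proof.
under eq_bigr do under eq_bigr do rewrite adj_sum.
under eq_bigr do rewrite exchange_big /=.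
rewrite exchange_big /= mulnC -sum_nat_const.
apply: eq_bigr => t tF.
have [zt _] := apexP tF.
have [a [c [za ac zc Et]]] := tri_rep (triF tF) zt.
exact: sumQ_gen za ac zc Et.
Qed.

Lemma adj_sym x y : adj x y = adj y x.
Proof.
apply: eq_existsb_in => t _; rewrite /Q eq_sym.
by case: (x \in t); case: (y \in t); rewrite //= orbC.
Qed.

Lemma adj_owner x y : adj x y -> exists t, [/\ t \in F, x \in t, y \in t, privb t x y & Q t x y].
Proof.
move=> /exists_inP[t tF Qt]; exists t; split => //; try by case/and4P: Qt.
exact: Q_priv.
Qed.

Lemma adj_neq x y : adj x y -> x != y.
Proof. by move=> /exists_inP[t _ /and4P[]]. Qed.

Lemma trifree x y z : adj x y -> adj y z -> adj x z -> False.
Proof.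
move=> a1 a2 a3.
have xy := adj_neq a1; have yz := adj_neq a2; have xz := adj_neq a3.
have [t1 [t1F x1 y1 p1 Q1]] := adj_owner a1.
have [t2 [t2F y2 z2 p2 Q2]] := adj_owner a2.
have [t3 [t3F x3 z3 p3 Q3]] := adj_owner a3.
have all_eq : t1 = t2 -> t2 = t3 -> False.
  move=> E12 E23; subst t2 t3.
  case/and4P: Q1 => _ _ _ /orP[]/eqP h1; case/and4P: Q2 => _ _ _ /orP[]/eqP h2;
  case/and4P: Q3 => _ _ _ /orP[]/eqP h3; move/eqP: xy; move/eqP: yz; move/eqP: xz; congruence.
case: (eqVneq t1 t2) => e12.
  by apply: all_eq => //; apply: (privP p3 t2F) => //; rewrite -e12.
case: (eqVneq t2 t3) => e23.
  by apply: all_eq => //; apply: esym; apply: (privP p1 t2F) => //; rewrite e23.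
case: (eqVneq t1 t3) => e13.
  have e12' : t1 = t2 by apply: (privP p2 t1F) => //; rewrite e13.
  by apply: all_eq => //; rewrite -e12'.
exact: (@rainbow_of x y z t1 t2 t3).
Qed.

Definition deg x := \sum_y (adj x y : nat).

Section Mantel.
Variable k : nat.
Hypothesis cV : #|V| = 4 * k.
Hypothesis cF : #|F| = 2 * k * k.

Lemma mantel : exists A : {set V}, #|A| = 2 * k /\ forall x y, adj x y = ((x \in A) != (y \in A)).
Proof.
have [v _ vmax] := @arg_maxnP V x0 predT deg isT.
set Dl := deg v in vmax.
set A := [set y | adj v y].
have cA : #|A| = Dl by rewrite /Dl /deg sum_bool.
have indep : forall x y, x \in A -> y \in A -> adj x y = false.
  move=> x y; rewrite !inE => vx vy; apply/negbTE/negP => xy; exact: (trifree vx xy vy).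
set B := ~: A.
have cB : #|B| + Dl = 4 * k by rewrite -cV -cA addnC cardsC.
pose AA := \sum_(x in A) \sum_(y in A) (adj x y : nat).
pose AB := \sum_(x in A) \sum_(y in B) (adj x y : nat).
pose BA := \sum_(x in B) \sum_(y in A) (adj x y : nat).
pose BB := \sum_(x in B) \sum_(y in B) (adj x y : nat).
have D : AA + AB + (BA + BB) = 4 * (2 * k * k).
  rewrite -cF -D_eq (splitA _ A) /AA /AB /BA /BB /B -!big_split /=; congr (_ + _); apply: eq_bigr => x _; by rewrite -splitA.
have AA0 : AA = 0 by rewrite /AA big1 // => x xA; rewrite big1 // => y yA; rewrite indep.
have ABBA : AB = BA.
  rewrite /AB exchange_big /=; apply: eq_bigr => y _; apply: eq_bigr => x _; by rewrite adj_sym.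
have sB : \sum_(x in B) deg x = BA + BB.
  rewrite /BA /BB -big_split /=; apply: eq_bigr => x _; by rewrite /deg (splitA _ A).
have leB : \sum_(x in B) deg x <= #|B| * Dl.
  by rewrite -sum_nat_const; apply: leq_sum => x _; apply: vmax.
have hD : Dl = 2 * k /\ BB = 0 /\ BA + BB = #|B| * Dl.
  rewrite sB in leB; move: D leB cB; rewrite AA0 ABBA.
  clear; move: #|B| Dl BA BB => b d ba bb D leB cB.
  have [sq1 sq2] := nat_AGM2 b d.
  rewrite cB in sq1 sq2.
  have bd : b * d = 4 * k * k by nia.
  have : b == d by rewrite -sq2 bd; apply/eqP; rewrite expnS expn1; lia.
  move/eqP => bEd; subst b.
  have dd : d = 2 * k by lia.
  by split; [|split]; nia.
move: hD => [dD [BB0 sBe]].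
have degB : forall x, x \in B -> deg x = Dl.
  by apply: sum_eq_max => [x _|]; [apply: vmax | rewrite sB].
have BBf : forall x y, x \in B -> y \in B -> adj x y = false.
  move=> x y xB yB; move/eqP: BB0; rewrite sum_nat_eq0 => /forall_inP/(_ x xB).
  by rewrite sum_nat_eq0 => /forall_inP/(_ y yB); rewrite eqb0 => /negbTE.
have cross : forall x y, x \in B -> y \in A -> adj x y.
  move=> x y xB yA.
  have dx : \sum_(y in A) (adj x y : nat) = #|A| * 1.
    rewrite muln1 cA -(degB x xB) /deg (splitA _ A) [X in _ + X]big1 ?addn0 // => z zB.
    by rewrite BBf.
  have := sum_eq_max (fun z _ => leq_b1 (adj x z)) dx yA.
  by case: (adj x y).
exists A; split; first by rewrite cA dD.
move=> x y; case: (boolP (x \in A)) => xA; case: (boolP (y \in A)) => yA /=.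
- by rewrite indep.
- by rewrite adj_sym cross // inE yA.
- by rewrite cross // inE xA.
- by rewrite BBf // inE ?xA ?yA.
Qed.
End Mantel.

Section Struct.
Variables (k : nat) (A : {set V}).
Hypothesis kpos : 0 < k.
Hypothesis cA : #|A| = 2 * k.
Hypothesis cAc : #|~: A| = 2 * k.
Hypothesis Hadj : forall x y, adj x y = ((x \in A) != (y \in A)).

Lemma cross_owner x y : (x \in A) != (y \in A) -> exists t, [/\ t \in F, x \in t, y \in t & privb t x y].
Proof.
rewrite -Hadj => /adj_owner[t [tF xt yt pt _]]; by exists t.
Qed.

Lemma apex_side t a : t \in F -> a \in t -> a != apex t -> (a \in A) != (apex t \in A).
Proof.
move=> tF at_ az; have [zt _] := apexP tF.
rewrite eq_sym -Hadj; apply/exists_inP; exists t => //.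
by rewrite /Q eq_sym az zt at_ eqxx.
Qed.

Lemma base_side t a c : t \in F -> a \in t -> c \in t -> a != apex t -> c != apex t ->
  (a \in A) = (c \in A).
Proof.
move=> tF at_ ct az cz; move: (apex_side tF at_ az) (apex_side tF ct cz).
by case: (a \in A); case: (c \in A); case: (apex t \in A).
Qed.

Lemma S2 t a c w : t \in F -> a \in t -> c \in t -> a != c -> a != apex t -> c != apex t ->
  (w \in A) != (a \in A) -> [set a; c; w] \in F.
Proof.
move=> tF at_ ct ac az cz wa'.
have [zt _] := apexP tF.
have sac := base_side tF at_ ct az cz.
have Et : t = [set a; c; apex t] by apply: tri_eq => //; apply: triF.
case: (eqVneq w (apex t)) => [->|wz]; first by rewrite -Et.
have wa : w != a by apply/eqP => E; rewrite E eqxx in wa'.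
have wc : w != c by apply/eqP => E; rewrite E sac eqxx in wa'.
have [s1 [s1F a1 w1 p1]] : exists s, [/\ s \in F, a \in s, w \in s & privb s a w].
  by apply: cross_owner; rewrite eq_sym.
have [s2 [s2F c2 w2 p2]] : exists s, [/\ s \in F, c \in s, w \in s & privb s c w].
  by apply: cross_owner; rewrite eq_sym -sac.
have wt : w \notin t by rewrite Et !inE (negbTE wa) (negbTE wc) (negbTE wz).
case: (eqVneq s1 s2) => e.
  have cw : c != w by rewrite eq_sym.
  have aw : a != w by rewrite eq_sym.
  subst s2; have E := tri_eq (triF s1F) a1 c2 w1 ac cw aw.
  by rewrite -E.
exfalso; apply: (@rainbow_of w a c s1 t s2) => //.
- by apply/eqP => E; rewrite -E w1 in wt.
- by apply/eqP => E; rewrite E w2 in wt.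
Qed.

Lemma tri_apex t : t \in F -> exists a c,
  [/\ a != c, a != apex t, c != apex t, a \in t & c \in t] /\ t = [set a; c; apex t].
Proof.
move=> tF; have [zt _] := apexP tF.
have [a [c [za ac zc Et]]] := tri_rep (triF tF) zt.
have at_ : a \in t by rewrite Et !inE eqxx orbT.
have ct : c \in t by rewrite Et !inE eqxx !orbT.
have az : a != apex t by rewrite eq_sym.
have cz : c != apex t by rewrite eq_sym.
exists a, c; split => //.
by apply: tri_eq => //; apply: triF.
Qed.

Lemma one_side t1 t2 : t1 \in F -> t2 \in F -> (apex t1 \in A) = (apex t2 \in A).
Proof.
move=> t1F t2F; case: (boolP ((apex t1 \in A) == (apex t2 \in A))) => [/eqP//|ne]; exfalso.
have [a1 [c1 [[ac1 az1 cz1 a1t c1t] E1]]] := tri_apex t1F.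
have [a2 [c2 [[ac2 az2 cz2 a2t c2t] E2]]] := tri_apex t2F.
have sa1 := apex_side t1F a1t az1; have sc1 := apex_side t1F c1t cz1.
have sa2 := apex_side t2F a2t az2; have sc2 := apex_side t2F c2t cz2.
have h12 : (a2 \in A) != (a1 \in A).
  by move: sa1 sa2 ne; case: (a1 \in A); case: (a2 \in A); case: (apex t1 \in A); case: (apex t2 \in A).
have F1 := S2 t1F a1t c1t ac1 az1 cz1 h12.
have h21 : (a1 \in A) != (a2 \in A) by rewrite eq_sym.
have F2 := S2 t2F a2t c2t ac2 az2 cz2 h21.
have [s [sF a1s a2s ps]] := cross_owner h21.
have e1 := privP ps F1 (_ : a1 \in [set a1; c1; a2]) (_ : a2 \in [set a1; c1; a2]).
have e2 := privP ps F2 (_ : a1 \in [set a2; c2; a1]) (_ : a2 \in [set a2; c2; a1]).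
have : c1 \in [set a2; c2; a1].
  rewrite e2 ?inE ?eqxx ?orbT // -e1 ?inE ?eqxx ?orbT //.
move/mem3 => [E|E|E].
- by move: sc1 sa2 ne; rewrite E; case: (a2 \in A); case: (apex t1 \in A); case: (apex t2 \in A).
- by move: sc1 sc2 ne; rewrite E; case: (c2 \in A); case: (apex t1 \in A); case: (apex t2 \in A).
- by rewrite E eqxx in ac1.
Qed.

Lemma struct_final t0 : t0 \in F -> exists (M : {set {set V}}) (R : {set V}),
  [/\ (forall e, e \in M -> #|e| = 2),
      (forall e x, e \in M -> x \in e -> x \notin R),
      (forall e e' x, e \in M -> e' \in M -> x \in e -> x \in e' -> e = e'),
      #|R| = 2 * k & F = mstruct M R].
Proof.
move=> t0F.
set sg := apex t0 \in A.
set R := [set x | (x \in A) == sg].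
set M := [set t :\ apex t | t in F].
have cR : #|R| = 2 * k.
  case E: sg.
    have -> : R = A by apply/setP => x; rewrite !inE E; case: (x \in A).
    exact: cA.
  have -> : R = ~: A by apply/setP => x; rewrite !inE E; case: (x \in A).
  exact: cAc.
have apR : forall t, t \in F -> apex t \in R.
  by move=> t tF; rewrite inE (one_side tF t0F).
have HM2 : forall e, e \in M -> #|e| = 2.
  move=> e /imsetP[t tF ->]; have [zt _] := apexP tF.
  by move: (triF tF); rewrite (cardsD1 (apex t)) zt => -[].
have HMR : forall e x, e \in M -> x \in e -> x \notin R.
  move=> e x /imsetP[t tF ->]; rewrite !inE => /andP[xz xt].
  have := apex_side tF xt xz; rewrite /sg (one_side tF t0F).
  by case: (x \in A); case: (apex t0 \in A).
have inF : forall e r, e \in M -> r \in R -> r |: e \in F.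
  move=> e r eM rR; move: (eM) => /imsetP[t tF Ee].
  have [a [c [[ac az cz at_ ct] Et]]] := tri_apex tF.
  have -> : r |: e = [set a; c; r].
    have memt : forall y, (y \in t) = [|| y == a, y == c | y == apex t].
      by move=> y; rewrite {1}Et !inE orbA.
    rewrite Ee; apply/setP => y; rewrite !inE memt.
    case: (eqVneq y (apex t)) => [->|yz] /=; first by rewrite [apex t == a]eq_sym [apex t == c]eq_sym (negbTE az) (negbTE cz) /= ?orbF ?andbF.
    by rewrite orbF; case: (y == r); case: (y == a); case: (y == c).
  apply: (S2 tF at_ ct ac az cz).
  have aR : a \notin R by apply: (HMR e a eM); rewrite Ee !inE az at_.
  by move: rR aR; rewrite !inE; case E: sg; case: (r \in A); case: (a \in A).
have [r0 r0R] : exists r, r \in R by apply/set0Pn; rewrite -card_gt0 cR muln_gt0 kpos.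
exists M, R; split; [exact: HM2 | exact: HMR | | exact: cR |].
- move=> e e' x eM e'M xe xe'.
  have xR := HMR e x eM xe.
  have xr : (x \in A) != (r0 \in A) by move: xR r0R; rewrite !inE; case E: sg; case: (x \in A); case: (r0 \in A).
  have [s [sF xs rs ps]] := cross_owner xr.
  have xe1 : x \in r0 |: e by rewrite in_setU1 xe orbT.
  have xe2 : x \in r0 |: e' by rewrite in_setU1 xe' orbT.
  have r1 : r0 \in r0 |: e by rewrite in_setU1 eqxx.
  have r2 : r0 \in r0 |: e' by rewrite in_setU1 eqxx.
  have E1 := privP ps (inF e r0 eM r0R) xe1 r1.
  have E2 := privP ps (inF e' r0 e'M r0R) xe2 r2.
  have re : r0 \notin e by apply/negP => h; move: (HMR e r0 eM h); rewrite r0R.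
  have re' : r0 \notin e' by apply/negP => h; move: (HMR e' r0 e'M h); rewrite r0R.
  by rewrite -(setU1K re) -(setU1K re') E1 E2.
- apply/setP => t; apply/idP/mstructP.
    move=> tF; exists (t :\ apex t), (apex t); split; [exact: imset_f | exact: apR |].
    by rewrite setD1K //; case: (apexP tF).
  by move=> [e [r [eM rR ->]]]; apply: inF.
Qed.
End Struct.
End Uniq.

Theorem theorem2p2 (n : nat) :
  0 < n -> 4 %| n ->
  [/\ triangle_family (Tstar n),
      #|Tstar n| = n ^ 2 %/ 8,
      ~ has_rainbow (Tstar n) &
      forall (V : finType) (F : {set {set V}}),
        #|V| = n -> triangle_family F -> #|F| = n ^ 2 %/ 8 ->
        ~ has_rainbow F ->
        exists f : 'I_n -> V, bijective f /\ F = [set f @: t | t : {set 'I_n} in Tstar n]].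
Proof.
move=> npos /dvdnP[k hk].
have hn : n = 4 * k by rewrite hk mulnC.
have kpos : 0 < k by lia.
have n8 : n ^ 2 %/ 8 = 2 * k * k.
  have -> : n ^ 2 = (2 * k * k) * 8 by rewrite hn expnS expn1; lia.
  by rewrite mulnK.
have H2 := M0_2 hn; have HR := @M0_R n k hn; have Hd := @M0_d n k hn.
split.
- by rewrite Tstar_mstruct; apply: mstruct_tri.
- by rewrite Tstar_mstruct mstruct_card // (card_M0 hn) (card_R0 hn) n8; lia.
- by rewrite Tstar_mstruct; apply: mstruct_norb.
move=> V F cV triF cF norb.
rewrite n8 in cF.
have cV' : #|V| = 4 * k by rewrite cV hn.
have [x0 _] : exists x0 : V, x0 \in [set: V] by apply/set0Pn; rewrite -card_gt0 cardsT cV'; lia.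
have [A [cA Hadj]] := mantel x0 triF norb cV' cF.
have cAc : #|~: A| = 2 * k by have := cardsC A; rewrite cA cV'; lia.
have [t0 t0F] : exists t0, t0 \in F by apply/set0Pn; rewrite -card_gt0 cF; nia.
have [M [R [HM2 HMR HMd cR EF]]] := struct_final triF norb kpos cA cAc Hadj t0F.
have cM : #|M| = k.
  have := mstruct_card HMR; rewrite -EF cF cR => E.
  apply/eqP; rewrite -(eqn_pmul2r (_ : 0 < 2 * k)); last by lia.
  by rewrite -E; apply/eqP; lia.
exists (fB M R k x0); split; first exact: (fB_bij x0 hn HM2 HMR HMd cM cR cV).
by rewrite Tstar_mstruct mstruct_transport (fB_M0 x0 hn HM2 cM cR cV) (fB_R0 x0 hn cM cR cV).
Qed.
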